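(* Let $d\in\mathbb{N}$ and $m_1,\dots,m_{2d}\in\mathbb{Z}$ with $m_i>0$ for all $i\neq 2d$ and $m_{2d}\geq 0$. Then $\mathsf{C}\mathsf{W}(m_1,\dots,m_{2d})\mathsf{E}$ has five distinct real eigenvalues whose absolute values are also pairwise distinct, and the eigenvalue of largest absolute value is $$s+\tfrac12\sqrt{5s^2+4ts+4}+\tfrac12\sqrt{9s^2+4ts+4s\sqrt{5s^2+4ts+4}},$$ where $t=\operatorname{tr}(W_1(m_1,\dots,m_{2d}))$ and $s=\operatorname{tr}^*(W_1(m_1,\dots,m_{2d}))$.
   Context: $A_1=\begin{pmatrix}1&1\\0&1\end{pmatrix}$, $B_1=\begin{pmatrix}1&0\\1&1\end{pmatrix}$, $W_1(m_1,\dots,m_{2d})=\prod_{i=1}^dA_1^{m_{2i-1}}B_1^{m_{2i}}$. Let $\mathsf{A}=\begin{pmatrix}1&1&0&0&2\\0&1&0&0&0\\0&0&1&1&0\\0&0&0&1&0\\0&0&0&0&1\end{pmatrix}$, $\mathsf{B}=\begin{pmatrix}1&0&0&0&0\\1&1&0&0&0\\0&0&1&0&0\\0&0&1&1&2\\0&0&0&0&1\end{pmatrix}$, $\mathsf{C}=\begin{pmatrix}1&0&0&0&0\\0&1&0&0&0\\0&0&1&0&0\\0&0&0&1&0\\2&0&0&2&1\end{pmatrix}$, $\mathsf{E}=\begin{pmatrix}0&0&0&1&0\\0&0&1&0&0\\0&1&0&0&0\\1&0&0&0&0\\0&0&0&0&1\end{pmatrix}$, and $\mathsf{W}(m_1,\dots,m_{2d})=\prod_{i=1}^d\mathsf{A}^{m_{2i-1}}\mathsf{B}^{m_{2i}}$.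 $\operatorname{tr}^*(M)=M_{1,2}+M_{2,1}$ is the anti-trace. *)

(* Defs.v *)
From mathcomp Require Import all_boot all_order all_algebra.
From mathcomp Require Import reals.
Set Implicit Arguments. Unset Strict Implicit. Unset Printing Implicit Defensive.
Import Order.TTheory GRing.Theory Num.Theory.
Local Open Scope ring_scope.

Section Mats.
Variable R : realType.

Definition mx_of_rows (n : nat) (l : seq (seq nat)) : 'M[R]_n :=
  \matrix_(i < n, j < n) (nth 0%N (nth [::] l i) j)%:R.

Definition A1 : 'M[R]_2 := mx_of_rows 2 [:: [:: 1; 1]; [:: 0; 1]]%N.
Definition B1 : 'M[R]_2 := mx_of_rows 2 [:: [:: 1; 0]; [:: 1; 1]]%N.

Definition mA : 'M[R]_5 := mx_of_rows 5
  [:: [:: 1; 1; 0; 0; 2]; [:: 0; 1; 0; 0; 0]; [:: 0; 0; 1; 1; 0];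
      [:: 0; 0; 0; 1; 0]; [:: 0; 0; 0; 0; 1]]%N.
Definition mB : 'M[R]_5 := mx_of_rows 5
  [:: [:: 1; 0; 0; 0; 0]; [:: 1; 1; 0; 0; 0]; [:: 0; 0; 1; 0; 0];
      [:: 0; 0; 1; 1; 2]; [:: 0; 0; 0; 0; 1]]%N.
Definition mC : 'M[R]_5 := mx_of_rows 5
  [:: [:: 1; 0; 0; 0; 0]; [:: 0; 1; 0; 0; 0]; [:: 0; 0; 1; 0; 0];
      [:: 0; 0; 0; 1; 0]; [:: 2; 0; 0; 2; 1]]%N.
Definition mE : 'M[R]_5 := mx_of_rows 5
  [:: [:: 0; 0; 0; 1; 0]; [:: 0; 0; 1; 0; 0]; [:: 0; 1; 0; 0; 0];
      [:: 1; 0; 0; 0; 0]; [:: 0; 0; 0; 0; 1]]%N.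

(* The exponent sequence m_1,...,m_{2d} is given 0-indexed: m k = m_{k+1}. *)
Definition W1 (d : nat) (m : nat -> nat) : 'M[R]_2 :=
  \prod_(i < d) (A1 ^+ m (2 * i)%N *m B1 ^+ m (2 * i).+1).
Definition W5 (d : nat) (m : nat -> nat) : 'M[R]_5 :=
  \prod_(i < d) (mA ^+ m (2 * i)%N *m mB ^+ m (2 * i).+1).

Definition antitr (M : 'M[R]_2) : R := M 0 1 + M 1 0.

End Mats.

(* Main.v *)
Require Import Defs.
From mathcomp Require Import all_boot all_order all_algebra.
From mathcomp Require Import reals.
From mathcomp.algebra_tactics Require Import ring lra.
Set Implicit Arguments. Unset Strict Implicit. Unset Printing Implicit Defensive.
Import Order.TTheory GRing.Theory Num.Theory.
Local Open Scope ring_scope.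


Section S.
Variable R : realType.

Definition mxN n (F : nat -> nat -> R) : 'M[R]_n := \matrix_(i < n, j < n) F i j.
Lemma mxNE n F (i j : 'I_n) : mxN n F i j = F i j.
Proof. by rewrite mxE. Qed.

Lemma minorE n (F : nat -> nat -> R) (i j : 'I_n.+1) :
  row' i (col' j (mxN n.+1 F)) = mxN n (fun k l => F (bump i k) (bump j l)).
Proof. by apply/matrixP => k l; rewrite !mxE. Qed.

Definition d2 (F : nat -> nat -> R) := F 0%N 0%N * F 1%N 1%N - F 0%N 1%N * F 1%N 0%N.
Lemma det2 (F : nat -> nat -> R) : \det (mxN 2 F) = d2 F.
Proof.
rewrite (expand_det_row _ ord0) !big_ord_recl big_ord0 /cofactor !det_mx11 !mxE /=.
rewrite /bump /d2 /=; ring.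
Qed.

Definition d3 (F : nat -> nat -> R) :=
  F 0%N 0%N * d2 (fun k l => F (bump 0%N k) (bump 0%N l))
  - F 0%N 1%N * d2 (fun k l => F (bump 0%N k) (bump 1%N l))
  + F 0%N 2%N * d2 (fun k l => F (bump 0%N k) (bump 2%N l)).
Lemma det3 (F : nat -> nat -> R) : \det (mxN 3 F) = d3 F.
Proof.
rewrite (expand_det_row _ ord0) !big_ord_recl big_ord0 /cofactor !minorE !det2 !mxNE /=.
rewrite /d3 /d2 /bump /=; ring.
Qed.

Definition d4 (F : nat -> nat -> R) :=
  F 0%N 0%N * d3 (fun k l => F (bump 0%N k) (bump 0%N l))
  - F 0%N 1%N * d3 (fun k l => F (bump 0%N k) (bump 1%N l))
  + F 0%N 2%N * d3 (fun k l => F (bump 0%N k) (bump 2%N l))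
  - F 0%N 3%N * d3 (fun k l => F (bump 0%N k) (bump 3%N l)).
Lemma det4 (F : nat -> nat -> R) : \det (mxN 4 F) = d4 F.
Proof.
rewrite (expand_det_row _ ord0) !big_ord_recl big_ord0 /cofactor !minorE !det3 !mxNE /=.
rewrite /d4 /d3 /d2 /bump /=; ring.
Qed.

Lemma det5 (F : nat -> nat -> R) :
  F 0%N 4%N = 0 -> F 1%N 4%N = 0 -> F 2%N 4%N = 0 -> F 3%N 4%N = 0 ->
  \det (mxN 5 F) = F 4%N 4%N * d4 F.
Proof.
move=> h0 h1 h2 h3.
rewrite (expand_det_col _ ord_max) !big_ord_recl big_ord0 !mxNE /=.
rewrite h0 h1 h2 h3 /cofactor !minorE !det4 /=.
rewrite /d4 /d3 /d2 /bump /=; rewrite !mul0r !add0r; ring.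
Qed.
Definition gE (a b c e : R) (i j : nat) : R :=
  match i, j with
  | 0%N, 0%N => a | 0%N, 1%N => b | 0%N, 4%N => 2 * b
  | 1%N, 0%N => c | 1%N, 1%N => e | 1%N, 4%N => 2 * (e - 1)
  | 2%N, 2%N => a | 2%N, 3%N => b | 2%N, 4%N => 2 * (a - 1)
  | 3%N, 2%N => c | 3%N, 3%N => e | 3%N, 4%N => 2 * c
  | 4%N, 4%N => 1 | _, _ => 0 end.

Definition Gm (X : 'M[R]_2) : 'M[R]_5 :=
  \matrix_(i < 5, j < 5) gE (X ord0 ord0) (X ord0 ord_max) (X ord_max ord0) (X ord_max ord_max) i j.

Ltac ocase i := let H := fresh in case: i => [[|[|[|[|[|?]]]]] H] //=.

Lemma GA : Gm (A1 R) = mA R.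
Proof.
apply/matrixP => i j; rewrite !mxE /=.
ocase i; ocase j. all: try (rewrite /mA /mx_of_rows !mxE /=). all: ring.
Qed.

Lemma mul2E (X Y : 'M[R]_2) i j :
  (X *m Y) i j = X i ord0 * Y ord0 j + X i ord_max * Y ord_max j.
Proof.
rewrite mxE !big_ord_recl big_ord0 addr0; congr (_ * _ + _ * _); congr (_ _ _);
by apply: val_inj.
Qed.

Lemma GM (X Y : 'M[R]_2) : Gm (X *m Y) = Gm X *m Gm Y.
Proof.
apply/matrixP => i j; rewrite [LHS]mxE !mul2E mxE !big_ord_recl big_ord0 !mxE /=.
ocase i; ocase j; ring.
Qed.

Definition lmx (l : seq (seq R)) : 'M[R]_5 := mxN 5 (fun i j => nth 0 (nth [::] l i) j).
Definition Sm : 'M[R]_5 := lmx [:: [:: 1; 0; 0; 0; 0]; [:: 0; 1; 0; 0; -2]; [:: 0; 0; 1; 0; -2];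
  [:: 0; 0; 0; 1; 0]; [:: 2; 0; 0; 2; 1]].
Definition Si : 'M[R]_5 := lmx [:: [:: 1; 0; 0; 0; 0]; [:: -4; 1; 0; -4; 2]; [:: -4; 0; 1; -4; 2];
  [:: 0; 0; 0; 1; 0]; [:: -2; 0; 0; -2; 1]].
Definition Km (a b c e : R) : 'M[R]_5 := lmx [:: [:: 4*b; 0; b; a+4*b; 0]; [:: 4*e; 0; e; c+4*e; 0];
  [:: 4*a+b; a; 0; 4*a; 0]; [:: 4*c+e; c; 0; 4*c; 0]; [:: 2; 0; 0; 2; 1]].

Lemma SSi : Sm *m Si = 1%:M.
Proof.
apply/matrixP => i j; rewrite /Sm /Si /lmx /mxN !mxE !big_ord_recl big_ord0 !mxE /=.
ocase i; ocase j; ring.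
Qed.

Lemma MS (X : 'M[R]_2) : (mC R *m Gm X *m mE R) *m Sm =
  Sm *m Km (X ord0 ord0) (X ord0 ord_max) (X ord_max ord0) (X ord_max ord_max).
Proof.
apply/matrixP => i j; rewrite /Sm /Km /lmx /mxN /Gm /mC /mE /mx_of_rows.
rewrite !(big_ord_recl, big_ord0, mxE) /=.
ocase i; ocase j; ring.
Qed.
End S.

Section S2.
Variable R : realType.

Ltac ocase i := let H := fresh in case: i => [[|[|[|[|[|?]]]]] H] //=.

Lemma eig_det n (g : 'M[R]_n) a : eigenvalue g a = (\det (a%:M - g) == 0).
Proof.
apply/eigenvalueP/det0P=> [[v Av_av v_nz] | [v v_nz Av_av]]; exists v => //.
  by rewrite mulmxBr Av_av mul_mx_scalar subrr.
by apply/eqP; rewrite -mul_mx_scalar eq_sym -subr_eq0 -mulmxBr Av_av.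
Qed.

Lemma G1 : Gm (1 : 'M[R]_2) = 1.
Proof. apply/matrixP => i j; rewrite !mxE /=; ocase i; ocase j; ring. Qed.

Lemma GB : Gm (B1 R) = mB R.
Proof.
apply/matrixP => i j; rewrite !mxE /=; ocase i; ocase j.
all: try (rewrite /mB /mx_of_rows !mxE /=); ring.
Qed.

Lemma Gpow (X : 'M[R]_2) k : Gm (X ^+ k) = Gm X ^+ k.
Proof.
elim: k => [|k IH]; first by rewrite !expr0 G1.
by rewrite !exprS -!mulmxE GM IH.
Qed.

Lemma W5E d m : W5 R d m = Gm (W1 R d m).
Proof.
rewrite /W5 /W1 (big_morph (@Gm R) (fun X Y => GM X Y) G1).
by apply: eq_bigr => i _; rewrite GM !Gpow GA GB.
Qed.
End S2.

Section S3.
Variable R : realType.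

Lemma subNmx (x : R) (F : nat -> nat -> R) :
  x%:M - mxN 5 F = mxN 5 (fun i j => (if (i == j)%N then x else 0) - F i j).
Proof.
apply/matrixP => i j; rewrite !mxE; congr (_ - _).
have -> : ((i : nat) == j) = (i == j) by [].
by case: (i == j).
Qed.

Lemma detKm (a b c e x : R) : a * e - b * c = 1 ->
  \det (x%:M - Km a b c e) = (x - 1) * (x ^+ 4 - 4 * (b + c) * x ^+ 3
     - ((b + c) ^+ 2 + 4 * (a + e) * (b + c) + 2) * x ^+ 2 - 4 * (b + c) * x + 1).
Proof.
move=> h; rewrite /Km /lmx subNmx det5 /=; try by rewrite subr0.
rewrite /d4 /d3 /d2 /bump /=.
apply/eqP; rewrite -subr_eq0; apply/eqP.
transitivity ((a*e - b*c - 1) * ((x-1) * ((a*e-b*c+1) - 4*(b+c)*x - 2*x^+2))); first ring.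
by rewrite h subrr mul0r.
Qed.

Lemma detMK (X : 'M[R]_2) (x : R) :
  \det (x%:M - (mC R *m Gm X *m mE R)) =
  \det (x%:M - Km (X ord0 ord0) (X ord0 ord_max) (X ord_max ord0) (X ord_max ord_max)).
Proof.
set M := mC R *m _ *m _; set K := Km _ _ _ _.
have hS : \det (@Sm R) != 0.
  apply/eqP => h0; have := congr1 determinant (@SSi R).
  by rewrite det_mulmx h0 mul0r det1 => /eqP; rewrite eq_sym oner_eq0.
have e : (x%:M - M) *m Sm R = Sm R *m (x%:M - K).
  by rewrite mulmxBl mulmxBr /M MS mul_scalar_mx mul_mx_scalar.
apply: (mulIf hS); rewrite -det_mulmx e det_mulmx mulrC.
done.
Qed.

Definition goodW (X : 'M[R]_2) :=
  [/\ X ord0 ord0 * X ord_max ord_max - X ord0 ord_max * X ord_max ord0 = 1,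
      1 <= X ord0 ord0, 1 <= X ord_max ord_max, 0 <= X ord0 ord_max & 0 <= X ord_max ord0].

Lemma goodM X Y : goodW X -> goodW Y -> goodW (X *m Y).
Proof.
case=> [h1 h2 h3 h4 h5] [g1 g2 g3 g4 g5]; rewrite /goodW !mul2E; split; [ | nra | nra | nra | nra].
transitivity ((X ord0 ord0 * X ord_max ord_max - X ord0 ord_max * X ord_max ord0) *
  (Y ord0 ord0 * Y ord_max ord_max - Y ord0 ord_max * Y ord_max ord0)); first ring.
by rewrite h1 g1 mulr1.
Qed.

Lemma goodM' X Y : goodW X -> goodW Y -> 1 <= X ord0 ord_max -> 1 <= (X *m Y) ord0 ord_max.
Proof. case=> [h1 h2 h3 h4 h5] [g1 g2 g3 g4 g5] h; rewrite mul2E; nra. Qed.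

Lemma good1 : goodW 1.
Proof. by rewrite /goodW !mxE /=; split; rewrite ?lexx ?ler01; ring. Qed.

Lemma goodA : goodW (A1 R).
Proof. by rewrite /goodW /A1 /mx_of_rows !mxE /=; split; rewrite ?lexx ?ler01; ring. Qed.
Lemma goodB : goodW (B1 R).
Proof. by rewrite /goodW /B1 /mx_of_rows !mxE /=; split; rewrite ?lexx ?ler01; ring. Qed.

Lemma goodX X k : goodW X -> goodW (X ^+ k).
Proof.
move=> hX; elim: k => [|k IH]; first by rewrite expr0; exact: good1.
by rewrite exprS -mulmxE; apply: goodM.
Qed.

Lemma W1good d m : (1 <= d)%N -> (0 < m 0%N)%N ->
  goodW (W1 R d m) /\ 1 <= W1 R d m ord0 ord_max.
Proof.
case: d => [//|d] _ hm; rewrite /W1 big_ord_recl /=.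
have hr : goodW (\prod_(i < d) (A1 R ^+ m (2 * lift ord0 i)%N *m B1 R ^+ m (2 * lift ord0 i).+1)).
  apply: (big_ind goodW) => //; first exact: good1.
    by move=> X Y hX hY; rewrite -mulmxE; apply: goodM.
  by move=> i _; apply: goodM; apply: goodX; [exact: goodA | exact: goodB].
have hA : goodW (A1 R ^+ m 0%N) by apply: goodX; exact: goodA.
have hA' : 1 <= (A1 R ^+ m 0%N) ord0 ord_max.
  case: (m 0%N) hm => [//|k] _; rewrite exprS -mulmxE mulmxE.
  rewrite -mulmxE; apply: goodM' => //; first exact: goodA.
    by apply: goodX; exact: goodA.
  by rewrite /A1 /mx_of_rows !mxE.
have hAB : goodW (A1 R ^+ m 0%N *m B1 R ^+ m 1%N) by apply: goodM => //; apply: goodX; exact: goodB.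
split; rewrite -mulmxE; first exact: goodM.
apply: goodM' => //; apply: goodM' => //; apply: goodX; exact: goodB.
Qed.
End S3.

Section S4.
Variable R : realType.

Ltac ocase i := let H := fresh in case: i => [[|[|[|[|[|?]]]]] H] //=.

Lemma lam_part (P : R -> bool) (x1 x2 x3 x4 v : R) :
  -x4 < x1 -> 1 < -x4 -> -x3 < 1 -> x2 < -x3 -> 0 < x2 ->
  (forall z, P z = ((z-1)*(z-x1)*(z-x2)*(z-x3)*(z-x4) == 0)) -> v = x1 ->
  exists lam : 'I_5 -> R,
    [/\ injective lam, (forall i, P (lam i)),
        (forall a, P a -> exists i, a = lam i),
        injective (fun i => `|lam i|) &
        exists i0, (forall i, `|lam i| <= `|lam i0|) /\ lam i0 = v].
Proof.
move=> h1 h2 h3 h4 h5 hP hv.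
have n1 : `|x1| = x1 by rewrite ger0_norm //; lra.
have n4 : `|x4| = - x4 by rewrite ler0_norm //; lra.
have n3 : `|x3| = - x3 by rewrite ler0_norm //; lra.
have n2 : `|x2| = x2 by rewrite ger0_norm //; lra.
have n0 : `|1 : R| = 1 by rewrite normr1.
pose lam := fun i : 'I_5 => nth 0 [:: x1; x4; 1; x3; x2] i.
have habs : injective (fun i => `|lam i|).
  move=> i j; rewrite /lam; ocase i; ocase j; rewrite ?n0 ?n1 ?n2 ?n3 ?n4 => h;
    try (by apply: val_inj); exfalso; lra.
exists lam; split => //.
- by move=> i j h; apply: habs; rewrite /= h.
- move=> i; rewrite hP /lam; ocase i; by rewrite subrr !(mulr0, mul0r).
- move=> a; rewrite hP !mulf_eq0 !subr_eq0.
  case/orP=> [/orP[/orP[/orP[|]|]|]|] /eqP ->.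
  + by exists (@Ordinal 5 2 isT).
  + by exists (@Ordinal 5 0 isT).
  + by exists (@Ordinal 5 4 isT).
  + by exists (@Ordinal 5 3 isT).
  + by exists (@Ordinal 5 1 isT).
- exists (@Ordinal 5 0 isT); split => //.
  move=> i; rewrite /lam; ocase i; rewrite ?n0 ?n1 ?n2 ?n3 ?n4; lra.
Qed.
End S4.

Unset Implicit Arguments.
Theorem mainTheorem14 (R : realType) (d : nat) (m : nat -> nat)
  (hd : (1 <= d)%N)
  (hpos : forall k : nat, (k.+1 < 2 * d)%N -> (0 < m k)%N) :
  let M : 'M[R]_5 := mC R *m W5 R d m *m mE R in
  let t : R := \tr (W1 R d m) in
  let s : R := antitr (W1 R d m) in
  let q : R := Num.sqrt (5 * s ^+ 2 + 4 * t * s + 4) in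
  exists lam : 'I_5 -> R,
    [/\ injective lam,
        (forall i, eigenvalue M (lam i)),
        (forall a : R, eigenvalue M a -> exists i, a = lam i),
        injective (fun i => `|lam i|) &
        exists i0 : 'I_5,
          (forall i, `|lam i| <= `|lam i0|) /\
          lam i0 = s + q / 2 + Num.sqrt (9 * s ^+ 2 + 4 * t * s + 4 * s * q) / 2].
Proof.
move=> M t s q.
have h2d : (1 < 2 * d)%N by move: hd; case: (d) => // d0 _; rewrite mulnS leq_addr.
have [[hdet ha he hb0 hc] hb] := @W1good R d m hd (hpos 0%N h2d).
move: hdet ha he hb0 hc hb.
set a := W1 R d m ord0 ord0; set b := W1 R d m ord0 ord_max.
set c := W1 R d m ord_max ord0; set e := W1 R d m ord_max ord_max.
move=> hdet ha he hb0 hc hb.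
have ht : t = a + e.
  rewrite /t /mxtrace !big_ord_recl big_ord0 addr0 /a /e.
  by congr (W1 R d m _ _ + W1 R d m _ _); apply: val_inj.
have hs : s = b + c.
  by rewrite /s /antitr /b /c; congr (W1 R d m _ _ + W1 R d m _ _); apply: val_inj.
have hchar x : \det (x%:M - M) = (x - 1) * (x ^+ 4 - 4 * s * x ^+ 3
     - (s ^+ 2 + 4 * t * s + 2) * x ^+ 2 - 4 * s * x + 1).
  by rewrite /M W5E detMK detKm // ht hs.
have hs1 : 1 <= s by rewrite hs; lra.
have ht2 : 2 <= t by rewrite ht; lra.
clearbody t s.
have hq0 : 0 <= q := sqrtr_ge0 _.
have hq2 : q ^+ 2 = 5 * s ^+ 2 + 4 * t * s + 4 by rewrite sqr_sqrtr //; nra.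
clearbody q.
set r1 : R := Num.sqrt (9 * s ^+ 2 + 4 * t * s + 4 * s * q).
have hr10 : 0 <= r1 := sqrtr_ge0 _.
have hr12 : r1 ^+ 2 = 9 * s ^+ 2 + 4 * t * s + 4 * s * q by rewrite sqr_sqrtr //; nra.
have hq2s : 2 * s + 2 < q by nra.
pose r2 : R := Num.sqrt ((2 * s - q) ^+ 2 - 4).
have hr20 : 0 <= r2 := sqrtr_ge0 _.
have hr22 : r2 ^+ 2 = (2 * s - q) ^+ 2 - 4 by rewrite sqr_sqrtr //; nra.
clearbody r1 r2.
have hr12' : r2 < r1 by nra.
pose x1 := s + q / 2 + r1 / 2.
pose x2 := (2 * s + q - r1) / 2.
pose x3 := (2 * s - q + r2) / 2.
pose x4 := (2 * s - q - r2) / 2.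
have e12 : x1 * x2 = 1.
  rewrite /x1 /x2; transitivity (((2 * s + q) ^+ 2 - r1 ^+ 2) / 4); first by field.
  rewrite hr12; transitivity ((q ^+ 2 - 5 * s ^+ 2 - 4 * t * s) / 4); first by field.
  by rewrite hq2; field.
have e34 : x3 * x4 = 1.
  rewrite /x3 /x4; transitivity (((2 * s - q) ^+ 2 - r2 ^+ 2) / 4); first by field.
  by rewrite hr22; field.
have h1 : - x4 < x1 by rewrite /x1 /x4; lra.
have h2 : 1 < - x4 by rewrite /x4; lra.
have h3 : - x3 < 1 by nra.
have h5 : 0 < x2 by nra.
have h4 : x2 < - x3 by nra.
apply: (lam_part (x1 := x1) (x2 := x2) (x3 := x3) (x4 := x4)) => // z.
rewrite eig_det hchar; congr (_ == 0).
have f12 : (z - x1) * (z - x2) = z ^+ 2 - (2 * s + q) * z + 1.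
  transitivity (z ^+ 2 - (2 * s + q) * z + x1 * x2); last by rewrite e12.
  rewrite /x1 /x2; by field.
have f34 : (z - x3) * (z - x4) = z ^+ 2 - (2 * s - q) * z + 1.
  transitivity (z ^+ 2 - (2 * s - q) * z + x3 * x4); last by rewrite e34.
  rewrite /x3 /x4; by field.
transitivity ((z - 1) * ((z ^+ 2 - (2 * s + q) * z + 1) * (z ^+ 2 - (2 * s - q) * z + 1))); last first.
  by rewrite -f12 -f34; ring.
congr (_ * _); apply/eqP; rewrite -subr_eq0; apply/eqP.
transitivity ((q ^+ 2 - (5 * s ^+ 2 + 4 * t * s + 4)) * z ^+ 2); first ring.
by rewrite hq2 subrr mul0r.
Qed.
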